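(* Let $Z$ be a separable real Banach space and $f:Z\to\mathbb{R}$ a continuous convex function. Then there exists a unique closed linear subspace $Y_f$ of $Z$ such that, for the quotient space $X_f:=Z/Y_f$ and the natural projection $\pi:Z\to X_f$, the function $f$ can be written as $$f(z)=c(\pi(z))+\ell(z)\quad\text{for all } z\in Z,$$ where $\ell\in Z^*$ and $c:X_f\to\mathbb{R}$ is a convex function which is essentially directionally coercive. Moreover, $$Y_f=\{v\in Z: f(z_0+tv)-f(z_0)-\langle \xi_0,tv\rangle=0 \text{ for all } t\in\mathbb{R}\},$$ where $z_0$ is any point of $Z$ and $\xi_0$ is any element of $\partial f(z_0)$.
   Context: For a continuous convex $f$ on a Banach space $Z$, $\partial f(x)=\{\xi\in Z^*: f(y)\ge f(x)+\langle\xi,y-x\rangle \text{ for all } y\in Z\}$. A function $g$ on a Banach space $X$ is directionally coercive if $\lim_{t\to\infty}g(x+tv)=\infty$ for all $x\in X$, $v\in X\setminus\{0\}$; it is essentially directionally coercive if there is $\ell\in X^*$ with $g-\ell$ directionally coercive. $Z/Y_f$ carries the quotient norm. *)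

(* Defs.v *)
From Stdlib Require Import Reals Lra.
Open Scope R_scope.

Record Banach := {
  car :> Type;
  vzero : car;
  vadd : car -> car -> car;
  vopp : car -> car;
  vscal : R -> car -> car;
  vnorm : car -> R;
  vadd_assoc : forall x y z, vadd x (vadd y z) = vadd (vadd x y) z;
  vadd_comm : forall x y, vadd x y = vadd y x;
  vadd_0 : forall x, vadd x vzero = x;
  vadd_opp : forall x, vadd x (vopp x) = vzero;
  vscal_1 : forall x, vscal 1 x = x;
  vscal_assoc : forall a b x, vscal a (vscal b x) = vscal (a * b) x;
  vscal_distr_v : forall a x y, vscal a (vadd x y) = vadd (vscal a x) (vscal a y);
  vscal_distr_s : forall a b x, vscal (a + b) x = vadd (vscal a x) (vscal b x);
  vnorm_eq0 : forall x, vnorm x = 0 -> x = vzero;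
  vnorm_scal : forall a x, vnorm (vscal a x) = Rabs a * vnorm x;
  vnorm_tri : forall x y, vnorm (vadd x y) <= vnorm x + vnorm y;
  vcomplete : forall u : nat -> car,
    (forall eps, eps > 0 -> exists N, forall m n, (m >= N)%nat -> (n >= N)%nat ->
        vnorm (vadd (u m) (vopp (u n))) < eps) ->
    exists l, forall eps, eps > 0 -> exists N, forall n, (n >= N)%nat ->
        vnorm (vadd (u n) (vopp l)) < eps
}.

Arguments vzero {_}.
Arguments vadd {_}.
Arguments vopp {_}.
Arguments vscal {_}.
Arguments vnorm {_}.

Definition vsub {Z : Banach} (x y : Z) : Z := vadd x (vopp y).

Definition separable (Z : Banach) : Prop :=
  exists d : nat -> Z, forall z eps, eps > 0 -> exists n, vnorm (vsub z (d n)) < eps.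

Definition continuous_fun {Z : Banach} (f : Z -> R) : Prop :=
  forall x eps, eps > 0 -> exists delta, delta > 0 /\
    forall y, vnorm (vsub y x) < delta -> Rabs (f y - f x) < eps.

Definition convex_fun {Z : Banach} (f : Z -> R) : Prop :=
  forall x y a, 0 <= a <= 1 ->
    f (vadd (vscal a x) (vscal (1 - a) y)) <= a * f x + (1 - a) * f y.

Definition linear_fun {Z : Banach} (l : Z -> R) : Prop :=
  (forall x y, l (vadd x y) = l x + l y) /\ (forall a x, l (vscal a x) = a * l x).

Definition in_dual {Z : Banach} (l : Z -> R) : Prop :=
  linear_fun l /\ exists C, forall x, Rabs (l x) <= C * vnorm x.

Definition subdiff {Z : Banach} (f : Z -> R) (x : Z) (xi : Z -> R) : Prop :=
  in_dual xi /\ forall y, f y >= f x + xi (vsub y x).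

Definition closed_subspace {Z : Banach} (Y : Z -> Prop) : Prop :=
  Y vzero /\ (forall x y, Y x -> Y y -> Y (vadd x y)) /\
  (forall a x, Y x -> Y (vscal a x)) /\
  (forall (u : nat -> Z) z, (forall n, Y (u n)) ->
     (forall eps, eps > 0 -> exists N, forall n, (n >= N)%nat -> vnorm (vsub (u n) z) < eps) ->
     Y z).

(* The quotient X = Z/Y is modelled by Z with the equivalence
   z ~ z' iff z - z' in Y.  A function on X is a function on Z constant on
   cosets; 0 in X is the class Y. *)
Definition coset_invariant {Z : Banach} (Y : Z -> Prop) (c : Z -> R) : Prop :=
  forall z y, Y y -> c (vadd z y) = c z.

(* An element of (Z/Y)^*: linear on Z/Y (i.e. linear on Z and vanishing on Y)
   and bounded w.r.t. the quotient norm ||[z]|| = inf_{y in Y} ||z + y||. *)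
Definition in_quot_dual {Z : Banach} (Y : Z -> Prop) (l : Z -> R) : Prop :=
  linear_fun l /\ (forall y, Y y -> l y = 0) /\
  exists C, C >= 0 /\ forall z y, Y y -> Rabs (l z) <= C * vnorm (vadd z y).

(* Directional coercivity on the quotient Z/Y of g (given as a coset-invariant
   function on Z): for every x and every nonzero v in Z/Y,
   lim_{t -> +oo} g(x + t v) = +oo. *)
Definition quot_dir_coercive {Z : Banach} (Y : Z -> Prop) (g : Z -> R) : Prop :=
  forall x v, ~ Y v -> forall M, exists T, forall t, t > T ->
    g (vadd x (vscal t v)) > M.

Definition quot_ess_dir_coercive {Z : Banach} (Y : Z -> Prop) (c : Z -> R) : Prop :=
  exists l, in_quot_dual Y l /\ quot_dir_coercive Y (fun z => c z - l z).

Definition decomposes {Z : Banach} (f : Z -> R) (Y : Z -> Prop) : Prop :=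
  closed_subspace Y /\
  exists (l : Z -> R) (c : Z -> R),
    in_dual l /\ coset_invariant Y c /\ convex_fun c /\
    quot_ess_dir_coercive Y c /\
    (forall z, f z = c z + l z).

(* Main.v *)
Require Import Defs.
From Stdlib Require Import Reals Lra Lia List Classical ClassicalEpsilon.
From Coquelicot Require Import Coquelicot.
Open Scope R_scope.

Inductive vexpr : Type :=
| VAtom (n : nat) | VZero | VAdd (a b : vexpr) | VOpp (a : vexpr) | VScal (r : R) (a : vexpr).

Fixpoint vden (Z : Banach) (env : list (car Z)) (e : vexpr) : car Z :=
  match e with
  | VAtom n => nth n env vzero
  | VZero => vzero
  | VAdd a b => vadd (vden Z env a) (vden Z env b)
  | VOpp a => vopp (vden Z env a)
  | VScal r a => vscal r (vden Z env a)
  end.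

Fixpoint vcoef (e : vexpr) (i : nat) : R :=
  match e with
  | VAtom n => if Nat.eqb n i then 1 else 0
  | VZero => 0
  | VAdd a b => vcoef a i + vcoef b i
  | VOpp a => - vcoef a i
  | VScal r a => r * vcoef a i
  end.

Fixpoint lincomb (Z : Banach) (env : list (car Z)) (c : nat -> R) : car Z :=
  match env with
  | nil => vzero
  | x :: env' => vadd (vscal (c 0%nat) x) (lincomb Z env' (fun i => c (S i)))
  end.

Section Basic.
Context {Z : Banach}.
Implicit Types x y u v w : car Z.

Lemma vadd0l x : vadd vzero x = x.
Proof. rewrite vadd_comm; apply vadd_0. Qed.

Lemma vadd_cancel_r x y z : vadd x z = vadd y z -> x = y.
Proof.
  intro H. rewrite <- (vadd_0 Z x), <- (vadd_0 Z y), <- (vadd_opp Z z).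
  rewrite !vadd_assoc, H. reflexivity.
Qed.

Lemma vscal0l x : vscal 0 x = vzero.
Proof.
  apply (vadd_cancel_r _ _ (vscal 0 x)).
  rewrite <- vscal_distr_s, vadd0l. f_equal; ring.
Qed.

Lemma vscal0r a : vscal a (@vzero Z) = vzero.
Proof. rewrite <- (vscal0l vzero), vscal_assoc, Rmult_0_r. reflexivity. Qed.

Lemma vopp_scal x : vopp x = vscal (-1) x.
Proof.
  apply (vadd_cancel_r _ _ x). rewrite vadd_comm, vadd_opp.
  rewrite vadd_comm. rewrite <- (vscal_1 Z x) at 1. rewrite <- vscal_distr_s.
  rewrite <- (vscal0l x). f_equal; ring.
Qed.

Lemma lincomb_ext env c1 c2 : (forall i, (i < length env)%nat -> c1 i = c2 i) ->
  lincomb Z env c1 = lincomb Z env c2.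
Proof.
  revert c1 c2; induction env as [|x env IH]; intros c1 c2 H; simpl; auto.
  rewrite (H 0%nat) by (simpl; lia). f_equal. apply IH. intros i Hi. apply H. simpl; lia.
Qed.

Lemma lincomb_add env c1 c2 :
  lincomb Z env (fun i => c1 i + c2 i) = vadd (lincomb Z env c1) (lincomb Z env c2).
Proof.
  revert c1 c2; induction env as [|x env IH]; intros c1 c2; simpl.
  - rewrite vadd_0; reflexivity.
  - rewrite IH, vscal_distr_s.
    rewrite <- !vadd_assoc. f_equal. rewrite !vadd_assoc. f_equal. apply vadd_comm.
Qed.

Lemma lincomb_scal env r c :
  lincomb Z env (fun i => r * c i) = vscal r (lincomb Z env c).
Proof.
  revert c; induction env as [|x env IH]; intros c; simpl.
  - rewrite vscal0r; reflexivity.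
  - rewrite IH, vscal_distr_v, vscal_assoc. reflexivity.
Qed.

Lemma lincomb_opp env c :
  lincomb Z env (fun i => - c i) = vopp (lincomb Z env c).
Proof.
  rewrite vopp_scal, <- lincomb_scal. apply lincomb_ext. intros; ring.
Qed.

Lemma lincomb_zero env : lincomb Z env (fun _ => 0) = vzero.
Proof.
  rewrite <- (vscal0l (lincomb Z env (fun _ => 0))), <- lincomb_scal.
  apply lincomb_ext; intros; ring.
Qed.

Lemma lincomb_atom env n :
  lincomb Z env (fun i => if Nat.eqb n i then 1 else 0) = nth n env vzero.
Proof.
  revert n; induction env as [|x env IH]; intros n; simpl.
  - destruct n; reflexivity.
  - destruct n as [|m]; simpl.
    + rewrite vscal_1. rewrite <- (vadd_0 Z x) at 2. f_equal. apply lincomb_zero.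
    + rewrite vscal0l, vadd0l. apply IH.
Qed.

Lemma vden_lincomb env e : vden Z env e = lincomb Z env (vcoef e).
Proof.
  induction e; simpl.
  - symmetry; apply lincomb_atom.
  - symmetry; apply lincomb_zero.
  - rewrite lincomb_add, IHe1, IHe2; reflexivity.
  - rewrite lincomb_opp, IHe; reflexivity.
  - rewrite lincomb_scal, IHe; reflexivity.
Qed.
End Basic.

Fixpoint allc (n : nat) (P : nat -> Prop) : Prop :=
  match n with O => True | S k => allc k P /\ P k end.

Lemma allc_spec n P : allc n P -> forall i, (i < n)%nat -> P i.
Proof.
  induction n; simpl; intros H i Hi; [lia|]. destruct H as [H1 H2].
  destruct (Nat.eq_dec i n); [subst; auto| apply IHn; auto; lia].
Qed.

Lemma vec_eq_lemma (Z : Banach) env e1 e2 :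
  allc (length env) (fun i => vcoef e1 i = vcoef e2 i) -> vden Z env e1 = vden Z env e2.
Proof.
  intro H. rewrite !vden_lincomb. apply lincomb_ext. apply allc_spec; auto.
Qed.

Ltac vlookup x l :=
  match l with
  | cons x _ => constr:(O)
  | cons _ ?l' => let n := vlookup x l' in constr:(S n)
  end.

Ltac vadd_atom x l :=
  match constr:(tt) with
  | _ => let _ := vlookup x l in constr:(l)
  | _ => constr:(app l (cons x nil))
  end.

Ltac vcollect t l :=
  match t with
  | vadd ?a ?b => let l1 := vcollect a l in vcollect b l1
  | vsub ?a ?b => let l1 := vcollect a l in vcollect b l1
  | vopp ?a => vcollect a l
  | vscal _ ?a => vcollect a l
  | vzero => l
  | _ => vadd_atom t l
  end.

Ltac vreify t l :=
  match t with
  | vadd ?a ?b => let ra := vreify a l in let rb := vreify b l in constr:(VAdd ra rb)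
  | vsub ?a ?b => let ra := vreify a l in let rb := vreify b l in constr:(VAdd ra (VOpp rb))
  | vopp ?a => let ra := vreify a l in constr:(VOpp ra)
  | vscal ?r ?a => let ra := vreify a l in constr:(VScal r ra)
  | vzero => constr:(VZero)
  | _ => let n := vlookup t l in constr:(VAtom n)
  end.

Ltac vec_eq_with tac :=
  match goal with
  | |- @eq (car ?Z) ?a ?b =>
    let l0 := vcollect a (@nil (car Z)) in
    let l := vcollect b l0 in
    let l' := eval simpl in l in
    let ea := vreify a l' in let eb := vreify b l' in
    change (vden Z l' ea = vden Z l' eb); apply vec_eq_lemma; simpl; repeat split; tac
  end.
Ltac vec_eq := vec_eq_with ltac:(ring).

Goal forall (Z : Banach) (x y : car Z) (t s : R), vsub (vadd x (vscal t y)) (vscal s (vadd y x)) = vadd (vscal (1 - s) x) (vscal (t - s) y).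
Proof. intros. vec_eq. Qed.
Goal forall (Z : Banach) (x : car Z), vsub x x = vzero.
Proof. intros. vec_eq. Qed.


Section Norms.
Context {Z : Banach}.
Implicit Types x y u v w : car Z.

Lemma vnorm0 : vnorm (@vzero Z) = 0.
Proof. rewrite <- (vscal0l (@vzero Z)), vnorm_scal, Rabs_R0; ring. Qed.

Lemma vnorm_opp x : vnorm (vopp x) = vnorm x.
Proof. rewrite vopp_scal, vnorm_scal. replace (Rabs (-1)) with 1 by (rewrite Rabs_left; lra). ring. Qed.

Lemma vnorm_nonneg x : 0 <= vnorm x.
Proof.
  pose proof (vnorm_tri Z x (vopp x)) as H. rewrite vadd_opp, vnorm0, vnorm_opp in H. lra.
Qed.

Lemma vnorm_sub_sym x y : vnorm (vsub x y) = vnorm (vsub y x).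
Proof.
  replace (vsub y x) with (vopp (vsub x y)) by vec_eq. now rewrite vnorm_opp.
Qed.

Lemma vnorm_sub_tri x y z : vnorm (vsub x z) <= vnorm (vsub x y) + vnorm (vsub y z).
Proof.
  replace (vsub x z) with (vadd (vsub x y) (vsub y z)) by vec_eq. apply vnorm_tri.
Qed.

Lemma vnorm_pos x : x <> vzero -> 0 < vnorm x.
Proof.
  intro H. destruct (vnorm_nonneg x) as [H1|H1]; auto. exfalso; apply H, vnorm_eq0; auto.
Qed.

Lemma vsub_zero_eq x y : vnorm (vsub x y) = 0 -> x = y.
Proof.
  intro H. apply vnorm_eq0 in H. replace x with (vadd (vsub x y) y) by vec_eq.
  rewrite H. vec_eq.
Qed.

Lemma vnorm_scal_sub a x y : vnorm (vsub (vscal a x) (vscal a y)) = Rabs a * vnorm (vsub x y).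
Proof.
  replace (vsub (vscal a x) (vscal a y)) with (vscal a (vsub x y)) by vec_eq. apply vnorm_scal.
Qed.

Section Lin.
Variable L : car Z -> R.
Hypothesis HL : linear_fun L.

Lemma lin_add x y : L (vadd x y) = L x + L y.
Proof. apply HL. Qed.
Lemma lin_scal a x : L (vscal a x) = a * L x.
Proof. apply HL. Qed.
Lemma lin_zero : L vzero = 0.
Proof. rewrite <- (vscal0l (@vzero Z)), lin_scal; ring. Qed.
Lemma lin_opp x : L (vopp x) = - L x.
Proof. rewrite vopp_scal, lin_scal; ring. Qed.
Lemma lin_sub x y : L (vsub x y) = L x - L y.
Proof. unfold vsub; rewrite lin_add, lin_opp; ring. Qed.
End Lin.
End Norms.

Ltac lin_simpl H := repeat (rewrite ?(lin_add _ H), ?(lin_sub _ H), ?(lin_scal _ H), ?(lin_opp _ H), ?(lin_zero _ H)).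

Definition conv1 (phi : R -> R) : Prop :=
  forall s t a, 0 <= a <= 1 -> phi (a * s + (1 - a) * t) <= a * phi s + (1 - a) * phi t.

Lemma line_conv (Z : Banach) (p : car Z -> R) x v :
  convex_fun p -> conv1 (fun t => p (vadd x (vscal t v))).
Proof.
  intros Hp s t a Ha.
  replace (vadd x (vscal (a * s + (1 - a) * t) v))
    with (vadd (vscal a (vadd x (vscal s v))) (vscal (1 - a) (vadd x (vscal t v)))) by vec_eq.
  apply Hp; auto.
Qed.

Lemma conv_sub_lin (Z : Banach) (p L : car Z -> R) :
  convex_fun p -> linear_fun L -> convex_fun (fun z => p z - L z).
Proof.
  intros Hp HL x y a Ha. lin_simpl HL. pose proof (Hp x y a Ha). nra.
Qed.

Lemma conv1_growth phi t1 t2 : conv1 phi -> t1 < t2 -> phi t1 < phi t2 ->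
  forall M, exists T, forall t, t > T -> phi t > M.
Proof.
  intros Hc H12 Hphi M.
  set (D := (phi t2 - phi t1) / (t2 - t1)).
  assert (HD : D > 0) by (unfold D; apply Rdiv_lt_0_compat; lra).
  assert (Hg : forall t, t > t2 -> phi t >= phi t2 + (t - t2) * D).
  { intros t Ht. set (a := (t - t2) / (t - t1)).
    assert (Ha : 0 <= a <= 1).
    { unfold a; split. apply Rmult_le_pos; [lra| left; apply Rinv_0_lt_compat; lra].
      apply (Rmult_le_reg_r (t - t1)); [lra|]. field_simplify; lra. }
    pose proof (Hc t1 t a Ha) as H.
    replace (a * t1 + (1 - a) * t) with t2 in H by (unfold a; field; lra).
    unfold a in H. unfold D.
    assert (E: (t - t1) * phi t2 <= (t - t2) * phi t1 + (t2 - t1) * phi t).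
    { replace ((t - t2) * phi t1 + (t2 - t1) * phi t) with
        (((t - t2) / (t - t1) * phi t1 + (1 - (t - t2) / (t - t1)) * phi t) * (t - t1)) by (field; lra).
      rewrite Rmult_comm. apply Rmult_le_compat_r; lra. }
    apply Rle_ge. apply (Rmult_le_reg_r (t2 - t1)); [lra|].
    replace ((phi t2 + (t - t2) * ((phi t2 - phi t1) / (t2 - t1))) * (t2 - t1))
      with ((t - t1) * phi t2 - (t - t2) * phi t1) by (field; lra). lra. }
  exists (Rmax t2 (t2 + (M - phi t2) / D)). intros t Ht.
  pose proof (Rmax_l t2 (t2 + (M - phi t2) / D)). pose proof (Rmax_r t2 (t2 + (M - phi t2) / D)).
  specialize (Hg t ltac:(lra)).
  assert (t - t2 > (M - phi t2) / D) by lra.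
  assert ((t - t2) * D > M - phi t2).
  { apply (Rmult_lt_compat_r D) in H1; auto. unfold Rdiv in H1. rewrite Rmult_assoc, Rinv_l in H1; lra. }
  lra.
Qed.

Lemma conv1_bounded_noninc phi T0 B : conv1 phi -> (forall t, t >= T0 -> phi t <= B) ->
  forall t1 t2, t1 < t2 -> phi t2 <= phi t1.
Proof.
  intros Hc HB t1 t2 H12. destruct (Rle_or_lt (phi t2) (phi t1)) as [|H]; auto.
  destruct (conv1_growth phi t1 t2 Hc H12 H B) as [T HT].
  set (t := Rmax T T0 + 1). pose proof (Rmax_l T T0). pose proof (Rmax_r T T0).
  specialize (HT t ltac:(unfold t; lra)). specialize (HB t ltac:(unfold t; lra)). lra.
Qed.
Ltac lin_simpl_in H X := repeat (rewrite ?(lin_add _ H), ?(lin_sub _ H), ?(lin_scal _ H), ?(lin_opp _ H), ?(lin_zero _ H) in X).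
Lemma eps_zero x : (forall eps, 0 < eps -> Rabs x <= eps) -> x = 0.
Proof.
  intro H. destruct (Req_dec x 0) as [|Hx]; auto. exfalso.
  assert (0 < Rabs x) by (apply Rabs_pos_lt; auto).
  specialize (H (Rabs x / 2) ltac:(lra)). lra.
Qed.
Lemma Rabs_def2b a b : Rabs a <= b -> - b <= a <= b.
Proof. intro H. pose proof (Rle_abs a). pose proof (Rle_abs (- a)). rewrite Rabs_Ropp in H1. lra. Qed.


Lemma dual_bound (Z : Banach) (L : car Z -> R) : in_dual L ->
  exists C, C > 0 /\ forall x, Rabs (L x) <= C * vnorm x.
Proof.
  intros [_ [C HC]]. exists (Rabs C + 1). split. pose proof (Rabs_pos C); lra.
  intro x. specialize (HC x). pose proof (Rle_abs C). pose proof (vnorm_nonneg x). nra.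
Qed.

Lemma cont_sub_dual (Z : Banach) (f L : car Z -> R) : continuous_fun f -> in_dual L ->
  continuous_fun (fun w => f w - L w).
Proof.
  intros Hf HL p eps Heps. destruct (dual_bound Z L HL) as [C [HC HCb]].
  destruct (Hf p (eps/2) ltac:(lra)) as [d [Hd Hdf]].
  exists (Rmin d (eps / (2 * C))). split.
  { apply Rmin_pos; auto. apply Rdiv_lt_0_compat; lra. }
  intros y Hy. pose proof (Rmin_l d (eps / (2 * C))). pose proof (Rmin_r d (eps / (2 * C))).
  specialize (Hdf y ltac:(lra)).
  assert (Hl : Rabs (L y - L p) < eps / 2).
  { rewrite <- (lin_sub _ (proj1 HL)). eapply Rle_lt_trans; [apply HCb|].
    apply (Rmult_lt_reg_l (/ C)). apply Rinv_0_lt_compat; auto.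
    rewrite <- Rmult_assoc, Rinv_l, Rmult_1_l by lra.
    replace (/ C * (eps / 2)) with (eps / (2 * C)) by (field; lra). lra. }
  replace (f y - L y - (f p - L p)) with ((f y - f p) - (L y - L p)) by ring.
  eapply Rle_lt_trans; [apply Rabs_triang|]. rewrite Rabs_Ropp. lra.
Qed.

Section Ystuff.
Context (Z : Banach) (f : car Z -> R) (hcont : continuous_fun f) (hconv : convex_fun f).

Definition Yset (z0 : car Z) (xi0 : car Z -> R) (v : car Z) : Prop :=
  forall t : R, f (vadd z0 (vscal t v)) - f z0 - xi0 (vscal t v) = 0.

Lemma subgrad_ineq z xi y : subdiff f z xi -> f y >= f z + xi y - xi z.
Proof. intros [[HL _] H]. specialize (H y). rewrite (lin_sub _ HL) in H. lra. Qed.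

Lemma affine_line z0 xi0 : subdiff f z0 xi0 -> forall v, Yset z0 xi0 v ->
  forall z t, f (vadd z (vscal t v)) = f z + t * xi0 v.
Proof.
  intros Hs v Hv.
  pose proof (proj1 Hs) as Hd. pose proof (proj1 Hd) as HL.
  set (g := fun w => f w - xi0 w).
  assert (Hgc : continuous_fun g) by (apply cont_sub_dual; auto).
  assert (Hgv : convex_fun g) by (apply conv_sub_lin; auto).
  assert (Hgl : forall s, g (vadd z0 (vscal s v)) = g z0).
  { intro s. specialize (Hv s). unfold g. lin_simpl HL. lin_simpl_in HL Hv. lra. }
  assert (Hgm : forall w, g z0 <= g w).
  { intro w. pose proof (subgrad_ineq z0 xi0 w Hs). unfold g. lra. }
  assert (Hineq : forall z t, g (vadd z (vscal t v)) <= g z).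
  { intros z t. apply le_epsilon. intros eps Heps.
    set (p := vadd z (vscal t v)).
    destruct (Hgc p eps Heps) as [d [Hd0 Hdg]].
    set (lam := Rmin (1/2) (d / (2 * (vnorm (vsub z0 z) + 1)))).
    pose proof (vnorm_nonneg (vsub z0 z)) as Hn0.
    assert (Hlam : 0 < lam <= 1/2).
    { unfold lam; split. apply Rmin_pos; [lra| apply Rdiv_lt_0_compat; lra]. apply Rmin_l. }
    assert (Hlam2 : lam * vnorm (vsub z0 z) < d).
    { assert (lam <= d / (2 * (vnorm (vsub z0 z) + 1))) by apply Rmin_r.
      apply Rle_lt_trans with (d / (2 * (vnorm (vsub z0 z) + 1)) * vnorm (vsub z0 z)).
      apply Rmult_le_compat_r; lra.
      apply (Rmult_lt_reg_r (2 * (vnorm (vsub z0 z) + 1))). lra.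
      field_simplify; try lra. nra. }
    set (w := vadd (vscal (1 - lam) z) (vscal lam (vadd z0 (vscal (t / lam) v)))).
    assert (Hw : vsub w p = vscal lam (vsub z0 z)).
    { unfold w, p. vec_eq_with ltac:(field; lra). }
    assert (Hwp : vnorm (vsub w p) < d).
    { rewrite Hw, vnorm_scal, Rabs_right by lra. lra. }
    specialize (Hdg w Hwp).
    assert (Hcv : g w <= (1 - lam) * g z + (1 - (1 - lam)) * g (vadd z0 (vscal (t / lam) v))).
    { unfold w. replace lam with (1 - (1 - lam)) at 2 by ring. apply Hgv. lra. }
    rewrite Hgl in Hcv. specialize (Hgm z).
    apply Rabs_def2 in Hdg. nra. }
  intros z t. apply Rle_antisym.
  - pose proof (Hineq z t). unfold g in H. lin_simpl HL. lin_simpl_in HL H.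
    pose proof (Hineq (vadd z (vscal t v)) (- t)) as H2.
    replace (vadd (vadd z (vscal t v)) (vscal (- t) v)) with z in H2 by vec_eq.
    unfold g in H2. lin_simpl_in HL H2. lra.
  - pose proof (Hineq (vadd z (vscal t v)) (- t)) as H2.
    replace (vadd (vadd z (vscal t v)) (vscal (- t) v)) with z in H2 by vec_eq.
    pose proof (Hineq z t) as H. unfold g in H, H2. lin_simpl_in HL H. lin_simpl_in HL H2. lra.
Qed.

Lemma slope_eq z0 xi0 z1 xi1 : subdiff f z0 xi0 -> subdiff f z1 xi1 -> forall v, Yset z0 xi0 v ->
  xi1 v = xi0 v.
Proof.
  intros H0 H1 v Hv. pose proof (proj1 (proj1 H1)) as HL.
  pose proof (affine_line z0 xi0 H0 v Hv z1 1) as A1.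
  pose proof (affine_line z0 xi0 H0 v Hv z1 (-1)) as A2.
  pose proof (subgrad_ineq z1 xi1 (vadd z1 (vscal 1 v)) H1) as S1.
  pose proof (subgrad_ineq z1 xi1 (vadd z1 (vscal (-1) v)) H1) as S2.
  lin_simpl_in HL S1. lin_simpl_in HL S2. lra.
Qed.

Lemma Yset_indep z0 xi0 z1 xi1 : subdiff f z0 xi0 -> subdiff f z1 xi1 -> forall v, Yset z0 xi0 v ->
  Yset z1 xi1 v.
Proof.
  intros H0 H1 v Hv t. pose proof (proj1 (proj1 H1)) as HL.
  rewrite (affine_line z0 xi0 H0 v Hv z1 t). lin_simpl HL.
  rewrite (slope_eq z0 xi0 z1 xi1 H0 H1 v Hv). ring.
Qed.

Lemma Yset_char z0 xi0 : subdiff f z0 xi0 -> forall v,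
  Yset z0 xi0 v <-> (forall z t, f (vadd z (vscal t v)) = f z + t * xi0 v).
Proof.
  intros H0 v. pose proof (proj1 (proj1 H0)) as HL. split.
  - apply affine_line; auto.
  - intros H t. rewrite H. lin_simpl HL. ring.
Qed.

Lemma Yset_closed z0 xi0 : subdiff f z0 xi0 -> closed_subspace (Yset z0 xi0).
Proof.
  intros H0. pose proof (proj1 (proj1 H0)) as HL.
  assert (C := Yset_char z0 xi0 H0).
  split; [|split; [|split]].
  - apply C. intros z t. rewrite vscal0r, (lin_zero _ HL).
    replace (vadd z vzero) with z by vec_eq. ring.
  - intros x y Hx Hy. apply C. intros z t. rewrite C in Hx, Hy.
    replace (vadd z (vscal t (vadd x y))) with (vadd (vadd z (vscal t x)) (vscal t y)) by vec_eq.
    rewrite Hy, Hx. lin_simpl HL. ring.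
  - intros a x Hx. apply C. intros z t. rewrite C in Hx.
    replace (vadd z (vscal t (vscal a x))) with (vadd z (vscal (t * a) x)) by vec_eq.
    rewrite Hx. lin_simpl HL. ring.
  - intros u z Hu0 Hlim. apply C. intros z' t.
    assert (Hu : forall n z t, f (vadd z (vscal t (u n))) = f z + t * xi0 (u n)) by (intro n; apply C; auto).
    destruct (dual_bound Z xi0 (proj1 H0)) as [K [HK HKb]].
    set (p := vadd z' (vscal t z)).
    apply Rminus_diag_uniq. apply eps_zero. intros eps Heps.
    destruct (hcont p (eps/2) ltac:(lra)) as [d [Hd Hdf]].
    set (e := Rmin (d / (Rabs t + 1)) (eps / (2 * (K * (Rabs t + 1))))).
    pose proof (Rabs_pos t) as Ht.
    assert (He : e > 0).
    { unfold e. apply Rmin_pos; apply Rdiv_lt_0_compat; try lra. nra. }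
    destruct (Hlim e He) as [N HN]. specialize (HN N (le_n _)).
    set (y := vadd z' (vscal t (u N))).
    assert (Hyp : vnorm (vsub y p) = Rabs t * vnorm (vsub (u N) z)).
    { unfold y, p. replace (vsub (vadd z' (vscal t (u N))) (vadd z' (vscal t z)))
        with (vscal t (vsub (u N) z)) by vec_eq. apply vnorm_scal. }
    pose proof (vnorm_nonneg (vsub (u N) z)) as Hn.
    assert (H1 : vnorm (vsub y p) < d).
    { rewrite Hyp. assert (e <= d / (Rabs t + 1)) by apply Rmin_l.
      apply Rle_lt_trans with ((Rabs t + 1) * vnorm (vsub (u N) z)). nra.
      apply (Rmult_lt_reg_l (/ (Rabs t + 1))). apply Rinv_0_lt_compat; lra.
      rewrite <- Rmult_assoc, Rinv_l, Rmult_1_l by lra.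
      apply Rlt_le_trans with e; auto. unfold Rdiv in H. lra. }
    specialize (Hdf y H1). unfold y in Hdf. rewrite Hu in Hdf.
    assert (H2 : Rabs (t * xi0 (u N) - t * xi0 z) <= eps / 2).
    { rewrite <- Rmult_minus_distr_l, Rabs_mult, <- (lin_sub _ HL).
      assert (e <= eps / (2 * (K * (Rabs t + 1)))) by apply Rmin_r.
      apply Rle_trans with (Rabs t * (K * vnorm (vsub (u N) z))).
      apply Rmult_le_compat_l; auto.
      apply Rle_trans with (K * (Rabs t + 1) * e).
      { assert (K * vnorm (vsub (u N) z) <= K * e) by (apply Rmult_le_compat_l; lra).
        assert (0 <= K * vnorm (vsub (u N) z)) by (apply Rmult_le_pos; lra).
        nra. }
      apply Rle_trans with (K * (Rabs t + 1) * (eps / (2 * (K * (Rabs t + 1))))).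
      apply Rmult_le_compat_l; auto. nra. right; field; nra. }
    unfold p in Hdf |- *.
    replace (f (vadd z' (vscal t z)) - (f z' + t * xi0 z)) with
      (- (f z' + t * xi0 (u N) - f (vadd z' (vscal t z))) + (t * xi0 (u N) - t * xi0 z)) by ring.
    eapply Rle_trans; [apply Rabs_triang|]. rewrite Rabs_Ropp. lra.
Qed.

End Ystuff.


Lemma uniq_Y (Z : Banach) (f : car Z -> R) (hcont : continuous_fun f) (hconv : convex_fun f)
  z0 xi0 (Y' : car Z -> Prop) : subdiff f z0 xi0 -> decomposes f Y' ->
  forall v, Y' v <-> Yset Z f z0 xi0 v.
Proof.
  intros H0 [HY [l [c [Hl [Hci [Hcc [Hcoer Hdec]]]]]]] v.
  pose proof (proj1 (proj1 H0)) as HL0. pose proof (proj1 Hl) as HLl.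
  destruct HY as [HY0 [HYadd [HYscal HYcl]]].
  split.
  - intros Hv.
    assert (Hline : forall t, f (vadd z0 (vscal t v)) = f z0 + t * l v).
    { intro t. rewrite !Hdec, Hci by (apply HYscal; auto). lin_simpl HLl. ring. }
    assert (E : l v = xi0 v).
    { pose proof (subgrad_ineq Z f z0 xi0 (vadd z0 (vscal 1 v)) H0) as S1.
      pose proof (subgrad_ineq Z f z0 xi0 (vadd z0 (vscal (-1) v)) H0) as S2.
      rewrite Hline in S1, S2. lin_simpl_in HL0 S1. lin_simpl_in HL0 S2. lra. }
    intro t. rewrite Hline. lin_simpl HL0. rewrite E. ring.
  - intros Hv. apply NNPP. intro Hn.
    destruct Hcoer as [l' [[HLl' _] Hco]].
    assert (Hn' : ~ Y' (vopp v)).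
    { intro H. apply Hn. replace v with (vscal (-1) (vopp v)) by vec_eq. auto. }
    assert (Hc : forall s, c (vadd z0 (vscal s v)) - l' (vadd z0 (vscal s v)) =
       (f z0 - l z0 - l' z0) + s * (xi0 v - l v - l' v)).
    { intro s. pose proof (Hdec (vadd z0 (vscal s v))) as D.
      rewrite (affine_line Z f hcont hconv z0 xi0 H0 v Hv) in D.
      lin_simpl_in HLl D. lin_simpl HLl'. lra. }
    set (A := f z0 - l z0 - l' z0). set (B := xi0 v - l v - l' v).
    destruct (Hco z0 v Hn A) as [T1 HT1].
    destruct (Hco z0 (vopp v) Hn' A) as [T2 HT2].
    set (t := Rmax T1 T2 + 1).
    pose proof (Rmax_l T1 T2). pose proof (Rmax_r T1 T2).
    specialize (HT1 t ltac:(unfold t; lra)). specialize (HT2 t ltac:(unfold t; lra)).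
    replace (vscal t (vopp v)) with (vscal (-t) v) in HT2 by vec_eq.
    rewrite Hc in HT1, HT2. fold A B in HT1, HT2. nra.
Qed.


Lemma div_le_helper a b s t : s > 0 -> t > 0 -> t * a <= s * b -> a / s <= b / t.
Proof.
  intros Hs Ht H. apply (Rmult_le_reg_r (s * t)). nra.
  replace (a / s * (s * t)) with (t * a) by (field; lra).
  replace (b / t * (s * t)) with (s * b) by (field; lra). auto.
Qed.

Lemma glb_ex (E : R -> Prop) (b : R) : (exists x, E x) -> (forall x, E x -> b <= x) ->
  {m | (forall x, E x -> m <= x) /\ forall b', (forall x, E x -> b' <= x) -> b' <= m}.
Proof.
  intros Hne Hb.
  destruct (completeness (fun r => E (- r))) as [m [Hm1 Hm2]].
  - exists (- b). intros r Hr. specialize (Hb _ Hr). lra.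
  - destruct Hne as [x Hx]. exists (- x). rewrite Ropp_involutive; auto.
  - exists (- m). split.
    + intros x Hx. assert (- x <= m) by (apply Hm1; rewrite Ropp_involutive; auto). lra.
    + intros b' Hb'. assert (m <= - b'). { apply Hm2. intros r Hr. specialize (Hb' _ Hr). lra. } lra.
Qed.

Section HB.
Context (Z : Banach) (q : car Z -> R) (hqc : convex_fun q) (hq0 : q vzero = 0)
  (hqcont : continuous_fun q).

Record pstate := {
  PV : car Z -> Prop; PL : car Z -> R;
  PV0 : PV vzero;
  PVadd : forall x y, PV x -> PV y -> PV (vadd x y);
  PVscal : forall a x, PV x -> PV (vscal a x);
  PLadd : forall x y, PV x -> PV y -> PL (vadd x y) = PL x + PL y;
  PLscal : forall a x, PV x -> PL (vscal a x) = a * PL x;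
  PLdom : forall x, PV x -> PL x <= q x }.

Lemma PL0 (S : pstate) : PL S vzero = 0.
Proof. rewrite <- (vscal0l (@vzero Z)), PLscal by apply PV0. ring. Qed.

Lemma PVsub (S : pstate) x y : PV S x -> PV S y -> PV S (vsub x y).
Proof. intros Hx Hy. unfold vsub. rewrite vopp_scal. apply PVadd; auto. apply PVscal; auto. Qed.

Lemma PLsub (S : pstate) x y : PV S x -> PV S y -> PL S (vsub x y) = PL S x - PL S y.
Proof.
  intros Hx Hy. unfold vsub. rewrite vopp_scal, PLadd, PLscal; auto. ring. apply PVscal; auto.
Qed.

Section Step.
Variable S : pstate.
Variable w : car Z.
Hypothesis Hw : ~ PV S w.

Lemma key_ineq u' u s t : PV S u' -> PV S u -> s > 0 -> t > 0 ->
  (PL S u' - q (vsub u' (vscal s w))) / s <= (q (vadd u (vscal t w)) - PL S u) / t.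
Proof.
  intros Hu' Hu Hs Ht. apply div_le_helper; auto.
  set (al := t / (s + t)).
  assert (Hal : 0 <= al <= 1).
  { unfold al; split. apply Rmult_le_pos; [lra| left; apply Rinv_0_lt_compat; lra].
    apply (Rmult_le_reg_r (s + t)); [lra|]. field_simplify; lra. }
  pose proof (hqc (vsub u' (vscal s w)) (vadd u (vscal t w)) al Hal) as Hc.
  replace (vadd (vscal al (vsub u' (vscal s w))) (vscal (1 - al) (vadd u (vscal t w))))
    with (vadd (vscal al u') (vscal (1 - al) u)) in Hc
    by (unfold al; vec_eq_with ltac:(field; lra)).
  assert (Hp : PV S (vadd (vscal al u') (vscal (1 - al) u))) by (apply PVadd; apply PVscal; auto).
  pose proof (PLdom S _ Hp) as Hd.
  rewrite PLadd, !PLscal in Hd by (try apply PVscal; auto).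
  assert (Hfin : al * PL S u' + (1 - al) * PL S u <= al * q (vsub u' (vscal s w)) + (1 - al) * q (vadd u (vscal t w))) by lra.
  unfold al in Hfin.
  apply (Rmult_le_compat_l (s + t)) in Hfin; [|lra].
  replace ((s + t) * (t / (s + t) * PL S u' + (1 - t / (s + t)) * PL S u)) with
    (t * PL S u' + s * PL S u) in Hfin by (field; lra).
  replace ((s + t) * (t / (s + t) * q (vsub u' (vscal s w)) + (1 - t / (s + t)) * q (vadd u (vscal t w)))) with
    (t * q (vsub u' (vscal s w)) + s * q (vadd u (vscal t w))) in Hfin by (field; lra).
  lra.
Qed.

Lemma ext_const : exists c,
  (forall u s, PV S u -> s > 0 -> PL S u - s * c <= q (vsub u (vscal s w))) /\
  (forall u t, PV S u -> t > 0 -> PL S u + t * c <= q (vadd u (vscal t w))).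
Proof.
  set (A := fun a => exists u s, PV S u /\ s > 0 /\ a = (PL S u - q (vsub u (vscal s w))) / s).
  destruct (completeness A) as [c [Hc1 Hc2]].
  - exists ((q (vadd vzero (vscal 1 w)) - PL S vzero) / 1).
    intros a [u [s [Hu [Hs ->]]]]. apply key_ineq; auto. apply PV0. lra.
  - exists ((PL S vzero - q (vsub vzero (vscal 1 w))) / 1). exists vzero, 1. split; [apply PV0|]. split; [lra|auto].
  - exists c. split.
    + intros u s Hu Hs. assert (H : (PL S u - q (vsub u (vscal s w))) / s <= c).
      { apply Hc1. exists u, s; auto. }
      apply (Rmult_le_compat_l s) in H; [|lra].
      replace (s * ((PL S u - q (vsub u (vscal s w))) / s)) with (PL S u - q (vsub u (vscal s w))) in H by (field; lra).
      lra.
    + intros u t Hu Ht. assert (H : c <= (q (vadd u (vscal t w)) - PL S u) / t).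
      { apply Hc2. intros a [u' [s [Hu' [Hs ->]]]]. apply key_ineq; auto. }
      apply (Rmult_le_compat_l t) in H; [|lra].
      replace (t * ((q (vadd u (vscal t w)) - PL S u) / t)) with (q (vadd u (vscal t w)) - PL S u) in H by (field; lra).
      lra.
Qed.

Lemma rep_uniq x t1 t2 : PV S (vsub x (vscal t1 w)) -> PV S (vsub x (vscal t2 w)) -> t1 = t2.
Proof.
  intros H1 H2. apply NNPP. intro Hne. apply Hw.
  replace w with (vscal (/ (t2 - t1)) (vsub (vsub x (vscal t1 w)) (vsub x (vscal t2 w)))).
  - apply PVscal, PVsub; auto.
  - vec_eq_with ltac:(field; intro; apply Hne; lra).
Qed.

Variable c : R.
Hypothesis Hc1 : forall u s, PV S u -> s > 0 -> PL S u - s * c <= q (vsub u (vscal s w)).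
Hypothesis Hc2 : forall u t, PV S u -> t > 0 -> PL S u + t * c <= q (vadd u (vscal t w)).

Definition tco (x : car Z) : R := epsilon (inhabits 0) (fun t => PV S (vsub x (vscal t w))).
Definition V' (x : car Z) : Prop := exists t, PV S (vsub x (vscal t w)).
Definition L' (x : car Z) : R := PL S (vsub x (vscal (tco x) w)) + tco x * c.

Lemma tco_spec x : V' x -> PV S (vsub x (vscal (tco x) w)).
Proof. intro H. unfold tco. apply (epsilon_spec (inhabits 0) (fun t => PV S (vsub x (vscal t w))) H). Qed.

Lemma tco_eq x t : PV S (vsub x (vscal t w)) -> tco x = t.
Proof. intro H. apply (rep_uniq x). apply tco_spec. exists t; auto. auto. Qed.

Lemma V'_0 : V' vzero.
Proof. exists 0. replace (vsub vzero (vscal 0 w)) with (@vzero Z) by vec_eq. apply PV0. Qed.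

Lemma V'_add x y : V' x -> V' y -> V' (vadd x y).
Proof.
  intros [a Ha] [b Hb]. exists (a + b).
  replace (vsub (vadd x y) (vscal (a + b) w)) with (vadd (vsub x (vscal a w)) (vsub y (vscal b w))) by vec_eq.
  apply PVadd; auto.
Qed.

Lemma V'_scal r x : V' x -> V' (vscal r x).
Proof.
  intros [a Ha]. exists (r * a).
  replace (vsub (vscal r x) (vscal (r * a) w)) with (vscal r (vsub x (vscal a w))) by vec_eq.
  apply PVscal; auto.
Qed.

Lemma L'_add x y : V' x -> V' y -> L' (vadd x y) = L' x + L' y.
Proof.
  intros Hx Hy. pose proof (tco_spec x Hx) as Sx. pose proof (tco_spec y Hy) as Sy.
  unfold L'. rewrite (tco_eq (vadd x y) (tco x + tco y)).
  - replace (vsub (vadd x y) (vscal (tco x + tco y) w)) with (vadd (vsub x (vscal (tco x) w)) (vsub y (vscal (tco y) w))) by vec_eq.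
    rewrite PLadd; auto. ring.
  - replace (vsub (vadd x y) (vscal (tco x + tco y) w)) with (vadd (vsub x (vscal (tco x) w)) (vsub y (vscal (tco y) w))) by vec_eq.
    apply PVadd; auto.
Qed.

Lemma L'_scal r x : V' x -> L' (vscal r x) = r * L' x.
Proof.
  intros Hx. pose proof (tco_spec x Hx) as Sx.
  unfold L'. rewrite (tco_eq (vscal r x) (r * tco x)).
  - replace (vsub (vscal r x) (vscal (r * tco x) w)) with (vscal r (vsub x (vscal (tco x) w))) by vec_eq.
    rewrite PLscal; auto. ring.
  - replace (vsub (vscal r x) (vscal (r * tco x) w)) with (vscal r (vsub x (vscal (tco x) w))) by vec_eq.
    apply PVscal; auto.
Qed.

Lemma L'_dom x : V' x -> L' x <= q x.
Proof.
  intros Hx. pose proof (tco_spec x Hx) as Sx. unfold L'.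
  set (t := tco x) in *. set (u := vsub x (vscal t w)) in *.
  destruct (Rtotal_order t 0) as [Hlt|[Heq|Hgt]].
  - pose proof (Hc1 u (- t) Sx ltac:(lra)) as H.
    replace (vsub u (vscal (- t) w)) with x in H by (unfold u; vec_eq). lra.
  - assert (E : u = x) by (unfold u; rewrite Heq; vec_eq).
    rewrite E in Sx. rewrite E, Heq. pose proof (PLdom S x Sx). lra.
  - pose proof (Hc2 u t Sx Hgt) as H.
    replace (vadd u (vscal t w)) with x in H by (unfold u; vec_eq). lra.
Qed.

Definition step_state : pstate :=
  {| PV := V'; PL := L'; PV0 := V'_0; PVadd := V'_add; PVscal := V'_scal;
     PLadd := L'_add; PLscal := L'_scal; PLdom := L'_dom |}.

Lemma step_ext x : PV S x -> PV step_state x /\ PL step_state x = PL S x.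
Proof.
  intro Hx. assert (H0 : PV S (vsub x (vscal 0 w))).
  { replace (vsub x (vscal 0 w)) with x by vec_eq. auto. }
  split. exists 0; auto. simpl. unfold L'. rewrite (tco_eq x 0 H0).
  replace (vsub x (vscal 0 w)) with x by vec_eq. ring.
Qed.

Lemma step_w : PV step_state w.
Proof. exists 1. replace (vsub w (vscal 1 w)) with (@vzero Z) by vec_eq. apply PV0. Qed.
End Step.

Lemma step_exists (S : pstate) (w : car Z) :
  exists S' : pstate, (forall x, PV S x -> PV S' x /\ PL S' x = PL S x) /\ PV S' w.
Proof.
  destruct (classic (PV S w)) as [H|H].
  - exists S. split; auto.
  - destruct (ext_const S w) as [c [Hc1 Hc2]].
    exists (step_state S w H c Hc1 Hc2). split.
    + apply step_ext.
    + apply step_w.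
Qed.

Definition step_sig (S : pstate) (w : car Z) :=
  constructive_indefinite_description _ (step_exists S w).

Lemma S0_add (x y : car Z) : x = vzero -> y = vzero -> vadd x y = vzero.
Proof. intros -> ->. vec_eq. Qed.
Lemma S0_scal a (x : car Z) : x = vzero -> vscal a x = vzero.
Proof. intros ->. vec_eq. Qed.
Lemma S0_ladd (x y : car Z) : x = vzero -> y = vzero -> (fun _ : car Z => 0) (vadd x y) = 0 + 0.
Proof. intros; simpl; ring. Qed.
Lemma S0_lscal a (x : car Z) : x = vzero -> (fun _ : car Z => 0) (vscal a x) = a * 0.
Proof. intros; simpl; ring. Qed.
Lemma S0_dom (x : car Z) : x = vzero -> (fun _ : car Z => 0) x <= q x.
Proof. intros ->. rewrite hq0. simpl; lra. Qed.

Definition S0 : pstate :=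
  {| PV := fun x => x = vzero; PL := fun _ => 0; PV0 := eq_refl; PVadd := S0_add; PVscal := S0_scal;
     PLadd := S0_ladd; PLscal := S0_lscal; PLdom := S0_dom |}.

Section Chain.
Variable d : nat -> car Z.
Hypothesis hd : forall z eps, eps > 0 -> exists n, vnorm (vsub z (d n)) < eps.

Fixpoint chain (n : nat) : pstate :=
  match n with
  | O => S0
  | S k => proj1_sig (step_sig (chain k) (d k))
  end.

Lemma chain_mono n m x : (n <= m)%nat -> PV (chain n) x -> PV (chain m) x /\ PL (chain m) x = PL (chain n) x.
Proof.
  intros Hnm Hx. induction Hnm as [|m Hnm IH].
  - auto.
  - destruct IH as [IH1 IH2]. simpl. destruct (step_sig (chain m) (d m)) as [S' [HS1 HS2]]. simpl.
    destruct (HS1 x IH1) as [A B]. split; auto. rewrite B; auto.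
Qed.

Lemma chain_d k : PV (chain (S k)) (d k).
Proof. simpl. destruct (step_sig (chain k) (d k)) as [S' [HS1 HS2]]. simpl. auto. Qed.

Lemma chain_dense z eps : eps > 0 -> exists n u, PV (chain n) u /\ vnorm (vsub z u) < eps.
Proof. intros He. destruct (hd z eps He) as [k Hk]. exists (S k), (d k). split; auto. apply chain_d. Qed.

Lemma q_small : exists del, del > 0 /\ forall u, vnorm u < del -> q u < 1.
Proof.
  destruct (hqcont vzero 1 ltac:(lra)) as [del [Hd H]]. exists del. split; auto.
  intros u Hu. assert (E : vsub u vzero = u) by vec_eq. specialize (H u). rewrite E, hq0 in H.
  specialize (H Hu). apply Rabs_def2 in H. lra.
Qed.

Lemma PL_bound : exists K, K > 0 /\ forall (S : pstate) x, PV S x -> Rabs (PL S x) <= K * vnorm x.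
Proof.
  destruct q_small as [del [Hd Hq]]. exists (2 / del). split. apply Rdiv_lt_0_compat; lra.
  intros S x Hx. destruct (classic (x = vzero)) as [->|Hne].
  - rewrite PL0, vnorm0, Rabs_R0. lra.
  - pose proof (vnorm_pos x Hne) as Hn. set (a := del / (2 * vnorm x)).
    assert (Ha : a > 0) by (unfold a; apply Rdiv_lt_0_compat; lra).
    assert (N1 : vnorm (vscal a x) < del).
    { rewrite vnorm_scal, Rabs_right by lra. unfold a. field_simplify; lra. }
    assert (N2 : vnorm (vscal (- a) x) < del).
    { rewrite vnorm_scal, Rabs_left by lra. unfold a. field_simplify; lra. }
    pose proof (PLdom S _ (PVscal S a x Hx)) as D1. pose proof (PLdom S _ (PVscal S (- a) x Hx)) as D2.
    rewrite PLscal in D1, D2 by auto. pose proof (Hq _ N1). pose proof (Hq _ N2).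
    assert (E : 2 / del * vnorm x = / a) by (unfold a; field; lra).
    rewrite E.
    assert (P1 : PL S x <= / a) by (apply (Rmult_le_reg_l a); [auto| rewrite Rinv_r by lra; lra]).
    assert (P2 : - PL S x <= / a) by (apply (Rmult_le_reg_l a); [auto| rewrite Rinv_r by lra; lra]).
    apply Rabs_le. lra.
Qed.

Variable K : R.
Hypothesis HK : K > 0.
Hypothesis HKb : forall (S : pstate) x, PV S x -> Rabs (PL S x) <= K * vnorm x.

Definition Sz (z : car Z) (r : R) : Prop := exists n u, PV (chain n) u /\ r = PL (chain n) u + K * vnorm (vsub z u).

Lemma Sz_ne z : exists r, Sz z r.
Proof. exists (PL (chain 0) vzero + K * vnorm (vsub z vzero)). exists 0%nat, vzero. split; auto. apply PV0. Qed.

Lemma Sz_lb z : forall r, Sz z r -> - K * vnorm z <= r.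
Proof.
  intros r [n [u [Hu ->]]]. specialize (HKb _ _ Hu). apply Rabs_def2b in HKb.
  assert (vnorm u <= vnorm (vsub u z) + vnorm z).
  { replace u with (vadd (vsub u z) z) at 1 by vec_eq. apply vnorm_tri. }
  rewrite (vnorm_sub_sym u z) in H. nra.
Qed.

Definition Lam (z : car Z) : R := proj1_sig (glb_ex (Sz z) _ (Sz_ne z) (Sz_lb z)).

Lemma Lam_approx z n u : PV (chain n) u -> Rabs (Lam z - PL (chain n) u) <= K * vnorm (vsub z u).
Proof.
  intros Hu. unfold Lam. destruct (glb_ex (Sz z) _ (Sz_ne z) (Sz_lb z)) as [m [Hm1 Hm2]]. simpl.
  apply Rabs_le. split.
  - assert (PL (chain n) u - K * vnorm (vsub z u) <= m).
    { apply Hm2. intros r [n' [u' [Hu' ->]]].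
      set (p := Nat.max n n').
      destruct (chain_mono n p u (Nat.le_max_l _ _) Hu) as [A1 A2].
      destruct (chain_mono n' p u' (Nat.le_max_r _ _) Hu') as [B1 B2].
      rewrite <- A2, <- B2.
      assert (E : PL (chain p) u - PL (chain p) u' = PL (chain p) (vsub u u')) by (rewrite PLsub; auto).
      pose proof (HKb _ _ (PVsub _ _ _ A1 B1)) as Hb. rewrite <- E in Hb. apply Rabs_def2b in Hb.
      pose proof (vnorm_sub_tri u z u'). rewrite (vnorm_sub_sym u z) in H. nra. }
    lra.
  - assert (m <= PL (chain n) u + K * vnorm (vsub z u)) by (apply Hm1; exists n, u; auto). lra.
Qed.

Lemma Lam_close z eps : eps > 0 -> exists n u, PV (chain n) u /\ vnorm (vsub z u) < eps /\
   Rabs (Lam z - PL (chain n) u) <= K * eps.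
Proof.
  intros He. destruct (chain_dense z eps He) as [n [u [Hu Hzu]]]. exists n, u. split; auto. split; auto.
  eapply Rle_trans. apply Lam_approx; auto. apply Rmult_le_compat_l; lra.
Qed.

Lemma Lam_add x y : Lam (vadd x y) = Lam x + Lam y.
Proof.
  apply Rminus_diag_uniq. replace (Lam (vadd x y) - (Lam x + Lam y)) with (Lam (vadd x y) - Lam x - Lam y) by ring.
  apply eps_zero. intros eps He.
  set (e := eps / (4 * K)). assert (He' : e > 0) by (unfold e; apply Rdiv_lt_0_compat; lra).
  destruct (Lam_close x e He') as [n1 [u1 [H1 [N1 A1]]]].
  destruct (Lam_close y e He') as [n2 [u2 [H2 [N2 A2]]]].
  set (p := Nat.max n1 n2).
  destruct (chain_mono n1 p u1 (Nat.le_max_l _ _) H1) as [P1 E1].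
  destruct (chain_mono n2 p u2 (Nat.le_max_r _ _) H2) as [P2 E2].
  pose proof (Lam_approx (vadd x y) p (vadd u1 u2) (PVadd _ _ _ P1 P2)) as A3.
  rewrite PLadd in A3 by auto. rewrite E1, E2 in A3.
  assert (vnorm (vsub (vadd x y) (vadd u1 u2)) <= vnorm (vsub x u1) + vnorm (vsub y u2)).
  { replace (vsub (vadd x y) (vadd u1 u2)) with (vadd (vsub x u1) (vsub y u2)) by vec_eq. apply vnorm_tri. }
  apply Rabs_def2b in A1. apply Rabs_def2b in A2. apply Rabs_def2b in A3.
  assert (K * e * 4 = eps) by (unfold e; field; lra).
  apply Rabs_le. split; nra.
Qed.

Lemma Lam_scal a x : Lam (vscal a x) = a * Lam x.
Proof.
  apply Rminus_diag_uniq. apply eps_zero. intros eps He.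
  set (e := eps / (2 * K * (Rabs a + 1))). pose proof (Rabs_pos a) as Ha.
  assert (He' : e > 0) by (unfold e; apply Rdiv_lt_0_compat; nra).
  destruct (Lam_close x e He') as [n [u [H1 [N1 A1]]]].
  pose proof (Lam_approx (vscal a x) n (vscal a u) (PVscal _ _ _ H1)) as A3.
  rewrite PLscal in A3 by auto. rewrite vnorm_scal_sub in A3.
  replace (Lam (vscal a x) - a * Lam x) with ((Lam (vscal a x) - a * PL (chain n) u) - a * (Lam x - PL (chain n) u)) by ring.
  eapply Rle_trans. apply Rabs_triang. rewrite Rabs_Ropp, Rabs_mult.
  assert (Rabs a * Rabs (Lam x - PL (chain n) u) <= Rabs a * (K * e)) by (apply Rmult_le_compat_l; auto).
  assert (K * (Rabs a * vnorm (vsub x u)) <= K * (Rabs a * e)).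
  { apply Rmult_le_compat_l; [lra|]. apply Rmult_le_compat_l; lra. }
  assert (K * e * (2 * (Rabs a + 1)) = eps) by (unfold e; field; lra).
  nra.
Qed.

Lemma Lam_bound x : Rabs (Lam x) <= K * vnorm x.
Proof.
  pose proof (Lam_approx x 0 vzero (PV0 _)) as A. simpl in A. rewrite Rminus_0_r in A.
  replace (vsub x vzero) with x in A by vec_eq. auto.
Qed.

Lemma Lam_dom x : Lam x <= q x.
Proof.
  apply le_epsilon. intros eps He.
  destruct (hqcont x (eps / 2) ltac:(lra)) as [del [Hd Hq]].
  set (e := Rmin del (eps / (2 * K))).
  assert (He' : e > 0) by (unfold e; apply Rmin_pos; auto; apply Rdiv_lt_0_compat; lra).
  destruct (Lam_close x e He') as [n [u [H1 [N1 A1]]]].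
  assert (vnorm (vsub u x) < del).
  { rewrite vnorm_sub_sym. pose proof (Rmin_l del (eps / (2 * K))). fold e in H. lra. }
  specialize (Hq u H). apply Rabs_def2 in Hq. pose proof (PLdom _ _ H1).
  assert (K * e <= eps / 2).
  { pose proof (Rmin_r del (eps / (2 * K))). fold e in H2.
    apply Rle_trans with (K * (eps / (2 * K))). apply Rmult_le_compat_l; lra. right; field; lra. }
  apply Rabs_def2b in A1. lra.
Qed.
End Chain.
End HB.

Lemma subgrad_exists (Z : Banach) (f : car Z -> R) : separable Z -> continuous_fun f -> convex_fun f ->
  forall z, exists xi, subdiff f z xi.
Proof.
  intros [d hd] hc hv z.
  set (q := fun u => f (vadd z u) - f z).
  assert (hqc : convex_fun q).
  { intros x y a Ha. unfold q.
    replace (vadd z (vadd (vscal a x) (vscal (1 - a) y))) with (vadd (vscal a (vadd z x)) (vscal (1 - a) (vadd z y))) by vec_eq.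
    pose proof (hv (vadd z x) (vadd z y) a Ha). nra. }
  assert (hq0 : q vzero = 0) by (unfold q; replace (vadd z vzero) with z by vec_eq; ring).
  assert (hqcont : continuous_fun q).
  { intros x eps He. destruct (hc (vadd z x) eps He) as [del [Hd H]]. exists del. split; auto.
    intros y Hy. unfold q. replace (f (vadd z y) - f z - (f (vadd z x) - f z)) with (f (vadd z y) - f (vadd z x)) by ring.
    apply H. replace (vsub (vadd z y) (vadd z x)) with (vsub y x) by vec_eq. auto. }
  destruct (PL_bound Z q hq0 hqcont) as [K [HK HKb]].
  assert (hd' : forall z eps, eps > 0 -> exists n, vnorm (vsub z (d n)) < eps) by auto.
  exists (Lam Z q hqc hq0 d K HK HKb). split.
  - split. split.
    + intros x y. apply (Lam_add Z q hqc hq0 d hd).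
    + intros a x. apply (Lam_scal Z q hqc hq0 d hd).
    + exists K. intro x. apply Lam_bound.
  - intro y. pose proof (Lam_dom Z q hqc hq0 hqcont d hd K HK HKb (vsub y z)) as H.
    change (q (vsub y z)) with (f (vadd z (vsub y z)) - f z) in H. replace (vadd z (vsub y z)) with y in H by vec_eq. lra.
Qed.


Lemma ex_series_cmp (u b : nat -> R) : (forall n, Rabs (u n) <= b n) -> ex_series b -> ex_series u.
Proof. intros H Hb. apply (ex_series_le u b); auto. Qed.

Lemma half_pow_pos n : 0 < (/2) ^ n.
Proof. apply pow_lt. lra. Qed.

Lemma ex_series_geomC (u : nat -> R) C : (forall n, Rabs (u n) <= C * (/2) ^ n) -> ex_series u.
Proof.
  intros H. apply (ex_series_cmp u (fun n => C * (/2) ^ n)); auto.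
  apply (ex_series_scal_l C (fun n => (/2) ^ n)). apply ex_series_geom. rewrite Rabs_right; lra.
Qed.

Lemma series_geom_half : Series (fun n => (/2) ^ n) = 2.
Proof.
  assert (H : Rabs (/2) < 1) by (rewrite Rabs_right; lra).
  rewrite (is_series_unique _ _ (is_series_geom _ H)). field.
Qed.

Lemma series_geom_half' : Series (pow (/2)) = 2.
Proof. exact series_geom_half. Qed.

Lemma series_nonneg (u : nat -> R) : (forall n, 0 <= u n) -> ex_series u -> 0 <= Series u.
Proof.
  intros H He.
  pose proof (Series_le (fun _ => 0) u ltac:(intro n; split; [lra| auto]) He) as H0.
  rewrite (Series_ext (fun _ => 0) (fun n => 0 * 0)) in H0 by (intro; ring).
  rewrite Series_scal_l in H0. lra.
Qed.

Lemma sum_ge_term (u : nat -> R) k : (forall n, 0 <= u n) -> u k <= sum_f_R0 u k.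
Proof.
  intros H. destruct k; simpl. lra. pose proof (cond_pos_sum u k H). lra.
Qed.

Lemma series_ge_term (u : nat -> R) k : (forall n, 0 <= u n) -> ex_series u -> u k <= Series u.
Proof.
  intros H He. rewrite (Series_incr_n u (S k)) by (auto; lia). simpl pred.
  pose proof (sum_ge_term u k H).
  assert (0 <= Series (fun j => u (S k + j)%nat)).
  { apply series_nonneg. intros; auto.
    apply (ex_series_incr_n u (S k)) in He. auto. }
  lra.
Qed.

Section Coer.
Context (Z : Banach) (f : car Z -> R) (hcont : continuous_fun f) (hconv : convex_fun f)
  (d : nat -> car Z) (hd : forall z eps, eps > 0 -> exists n, vnorm (vsub z (d n)) < eps)
  (z0 : car Z) (xi0 : car Z -> R) (H0 : subdiff f z0 xi0)
  (xi : nat -> car Z -> R) (Hxi : forall n, subdiff f (d n) (xi n))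
  (K : nat -> R) (HK0 : forall n, 0 <= K n)
  (HK : forall n w, Rabs (xi n w - xi0 w) <= K n * vnorm w).

Let HL0 : linear_fun xi0 := proj1 (proj1 H0).
Let HLn n : linear_fun (xi n) := proj1 (proj1 (Hxi n)).

Definition mm n := f (d n) - xi n (d n).
Definition m0 := f z0 - xi0 z0.
Definition aa n := (/2) ^ n / 4 / (1 + K n + Rabs (mm n)).

Lemma den_pos n : 0 < 1 + K n + Rabs (mm n).
Proof. pose proof (HK0 n). pose proof (Rabs_pos (mm n)). lra. Qed.

Lemma aa_pos n : 0 < aa n.
Proof.
  unfold aa. pose proof (den_pos n). pose proof (half_pow_pos n).
  apply Rdiv_lt_0_compat; lra.
Qed.

Lemma aa_bound n X : 0 <= X <= 1 + K n + Rabs (mm n) -> aa n * X <= (/2) ^ n / 4.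
Proof.
  intros HX. pose proof (den_pos n). pose proof (half_pow_pos n). unfold aa.
  replace ((/2) ^ n / 4 / (1 + K n + Rabs (mm n)) * X) with ((/2) ^ n / 4 * (X / (1 + K n + Rabs (mm n)))) by (field; lra).
  assert (X / (1 + K n + Rabs (mm n)) <= 1).
  { apply (Rmult_le_reg_r (1 + K n + Rabs (mm n))); auto. field_simplify; lra. }
  assert (0 <= (/2) ^ n / 4) by lra. nra.
Qed.

Lemma aa_le n : aa n <= (/2) ^ n / 4.
Proof.
  pose proof (aa_bound n 1). pose proof (HK0 n). pose proof (Rabs_pos (mm n)).
  rewrite Rmult_1_r in H. apply H. lra.
Qed.

Definition P n w := aa n * (xi n w - xi0 w).
Definition lp w := Series (fun n => P n w).

Lemma P_bound n w : Rabs (P n w) <= vnorm w / 4 * (/2) ^ n.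
Proof.
  unfold P. rewrite Rabs_mult, (Rabs_right (aa n)) by (pose proof (aa_pos n); lra).
  pose proof (aa_pos n). pose proof (HK n w). pose proof (vnorm_nonneg w).
  assert (aa n * K n <= (/2) ^ n / 4).
  { apply aa_bound. pose proof (HK0 n). pose proof (Rabs_pos (mm n)). lra. }
  apply Rle_trans with (aa n * (K n * vnorm w)). apply Rmult_le_compat_l; lra.
  rewrite <- Rmult_assoc. apply Rle_trans with ((/2) ^ n / 4 * vnorm w).
  apply Rmult_le_compat_r; auto. right; field.
Qed.

Lemma ex_P w : ex_series (fun n => P n w).
Proof. apply (ex_series_geomC _ (vnorm w / 4)). intro n; apply (P_bound n w). Qed.

Lemma ex_absP w : ex_series (fun n => Rabs (P n w)).
Proof. apply (ex_series_geomC _ (vnorm w / 4)). intro n. rewrite Rabs_Rabsolu. apply P_bound. Qed.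

Lemma lp_add x y : lp (vadd x y) = lp x + lp y.
Proof.
  unfold lp. rewrite <- Series_plus by apply ex_P. apply Series_ext. intro n. unfold P.
  rewrite (lin_add _ (HLn n)), (lin_add _ HL0). ring.
Qed.

Lemma lp_scal a x : lp (vscal a x) = a * lp x.
Proof.
  unfold lp. rewrite <- Series_scal_l. apply Series_ext. intro n. unfold P.
  rewrite (lin_scal _ (HLn n)), (lin_scal _ HL0). ring.
Qed.

Lemma lp_bound w : Rabs (lp w) <= vnorm w.
Proof.
  unfold lp. eapply Rle_trans. apply Series_Rabs, ex_absP.
  eapply Rle_trans. apply (Series_le _ (fun n => vnorm w / 4 * (/2) ^ n)).
  - intro n. split. apply Rabs_pos. apply P_bound.
  - apply (ex_series_scal_l (vnorm w / 4) (fun n => (/2) ^ n)). apply ex_series_geom. rewrite Rabs_right; lra.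
    - rewrite Series_scal_l. rewrite ?series_geom_half, ?series_geom_half'. pose proof (vnorm_nonneg w). lra.
Qed.

Lemma lp_Y y : Yset Z f z0 xi0 y -> lp y = 0.
Proof.
  intro Hy. unfold lp. rewrite (Series_ext _ (fun n => 0 * 0)).
  - rewrite Series_scal_l. ring.
  - intro n. unfold P. rewrite (slope_eq Z f hcont hconv z0 xi0 (d n) (xi n) H0 (Hxi n) y Hy). ring.
Qed.

Definition ss := Series aa.
Lemma ex_aa : ex_series aa.
Proof.
  apply (ex_series_geomC _ (/4)). intro n. pose proof (aa_pos n). pose proof (aa_le n).
  rewrite Rabs_right by lra. lra.
Qed.

Lemma ss_bounds : 0 <= ss <= 1/2.
Proof.
  split. apply series_nonneg. intro n; pose proof (aa_pos n); lra. apply ex_aa.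
  unfold ss. eapply Rle_trans. apply (Series_le _ (fun n => /4 * (/2) ^ n)).
  - intro n. pose proof (aa_pos n). pose proof (aa_le n). lra.
  - apply (ex_series_scal_l (/4) (fun n => (/2) ^ n)). apply ex_series_geom. rewrite Rabs_right; lra.
  - rewrite Series_scal_l, ?series_geom_half, ?series_geom_half'. lra.
Qed.

Definition Sm := Series (fun n => aa n * mm n).
Definition EE w := Series (fun n => aa n * (f w - xi n w - mm n)).

Lemma aa_mm_bound n : Rabs (aa n * mm n) <= (/2) ^ n / 4.
Proof.
  rewrite Rabs_mult, (Rabs_right (aa n)) by (pose proof (aa_pos n); lra).
  apply aa_bound. pose proof (HK0 n). pose proof (Rabs_pos (mm n)). lra.
Qed.

Lemma EE_eq w : EE w = ss * (f w - xi0 w) - Sm - lp w.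
Proof.
  set (A := f w - xi0 w).
  assert (E1 : ex_series (fun n => aa n * A - aa n * mm n)).
  { apply (ex_series_geomC _ ((Rabs A + 1) / 4)). intro n.
    eapply Rle_trans. apply Rabs_triang. rewrite Rabs_Ropp, Rabs_mult, (Rabs_right (aa n)) by (pose proof (aa_pos n); lra).
    pose proof (aa_mm_bound n). pose proof (aa_le n). pose proof (Rabs_pos A). pose proof (half_pow_pos n).
    assert (aa n * Rabs A <= (/2) ^ n / 4 * Rabs A) by (apply Rmult_le_compat_r; lra). nra. }
  assert (E2 : ex_series (fun n => aa n * A)).
  { apply (ex_series_geomC _ (Rabs A / 4)). intro n. rewrite Rabs_mult, (Rabs_right (aa n)) by (pose proof (aa_pos n); lra).
    pose proof (aa_le n). pose proof (Rabs_pos A).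
    apply Rle_trans with ((/2) ^ n / 4 * Rabs A). apply Rmult_le_compat_r; lra. right; field. }
  assert (E3 : ex_series (fun n => aa n * mm n)).
  { apply (ex_series_geomC _ (/4)). intro n. pose proof (aa_mm_bound n). lra. }
  unfold EE. rewrite (Series_ext _ (fun n => (aa n * A - aa n * mm n) - P n w)).
  2:{ intro n. unfold P, A. ring. }
  rewrite Series_minus by (auto; apply ex_P). rewrite Series_minus by auto.
  fold (lp w). unfold Sm. rewrite (Series_ext (fun n => aa n * A) (fun n => A * aa n)) by (intro; ring).
  rewrite Series_scal_l. unfold ss. ring.
Qed.

Lemma EE_ge_term w k : aa k * (f w - xi k w - mm k) <= EE w.
Proof.
  unfold EE. apply (series_ge_term (fun n => aa n * (f w - xi n w - mm n))).
  - intro n. apply Rmult_le_pos. pose proof (aa_pos n); lra.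
    pose proof (subgrad_ineq Z f (d n) (xi n) w (Hxi n)). unfold mm. lra.
  - apply (ex_series_geomC _ ((Rabs (f w - xi0 w) + vnorm w + 1) / 4)). intro n.
    rewrite Rabs_mult, (Rabs_right (aa n)) by (pose proof (aa_pos n); lra).
    set (A := f w - xi0 w).
    assert (Rabs (f w - xi n w - mm n) <= Rabs A + K n * vnorm w + Rabs (mm n)).
    { replace (f w - xi n w - mm n) with (A - (xi n w - xi0 w) - mm n) by (unfold A; ring).
      eapply Rle_trans. apply Rabs_triang. rewrite Rabs_Ropp.
      pose proof (HK n w). eapply Rle_trans. apply Rplus_le_compat_r. apply Rabs_triang. rewrite Rabs_Ropp. lra. }
    pose proof (aa_pos n). pose proof (aa_le n). pose proof (Rabs_pos A). pose proof (vnorm_nonneg w).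
    assert (aa n * K n <= (/2) ^ n / 4) by (apply aa_bound; pose proof (HK0 n); pose proof (Rabs_pos (mm n)); lra).
    assert (aa n * Rabs (mm n) <= (/2) ^ n / 4) by (apply aa_bound; pose proof (HK0 n); pose proof (Rabs_pos (mm n)); lra).
    apply Rle_trans with (aa n * (Rabs A + K n * vnorm w + Rabs (mm n))). apply Rmult_le_compat_l; lra.
    assert (aa n * Rabs A <= (/2) ^ n / 4 * Rabs A) by (apply Rmult_le_compat_r; lra).
    assert (aa n * K n * vnorm w <= (/2) ^ n / 4 * vnorm w) by (apply Rmult_le_compat_r; lra).
    nra.
Qed.

Lemma EE_nonneg w : 0 <= EE w.
Proof.
  pose proof (EE_ge_term w 0) as A. pose proof (aa_pos 0) as B.
  pose proof (subgrad_ineq Z f (d 0) (xi 0) w (Hxi 0)) as C.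
  assert (0 <= aa 0 * (f w - xi 0%nat w - mm 0)) by (apply Rmult_le_pos; unfold mm; lra). lra.
Qed.

Lemma decomp w : f w - xi0 w - lp w = (1 - ss) * (f w - xi0 w - m0) + EE w + (1 - ss) * m0 + Sm.
Proof. rewrite EE_eq. ring. Qed.

Lemma transfer (p : car Z -> R) x v B : convex_fun p ->
  (forall t, t >= 0 -> p (vadd x (vscal t v)) <= B) ->
  forall z t1 t2, t1 < t2 -> p (vadd z (vscal t2 v)) <= p (vadd z (vscal t1 v)).
Proof.
  intros Hp HB z. apply (conv1_bounded_noninc (fun t => p (vadd z (vscal t v))) 0 (1/2 * p (vsub (vscal 2 z) x) + 1/2 * B)).
  - apply line_conv; auto.
  - intros t Ht. simpl.
    replace (vadd z (vscal t v)) with (vadd (vscal (1/2) (vsub (vscal 2 z) x)) (vscal (1 - 1/2) (vadd x (vscal (2 * t) v)))) by vec_eq_with ltac:(field).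
    eapply Rle_trans. apply Hp. lra. specialize (HB (2 * t) ltac:(lra)). lra.
Qed.

Lemma coercive_main : quot_dir_coercive (Yset Z f z0 xi0) (fun z => (f z - xi0 z) - lp z).
Proof.
  intros x v Hv M.
  set (h := fun t => (f (vadd x (vscal t v)) - xi0 (vadd x (vscal t v))) - lp (vadd x (vscal t v))).
  assert (Hlin : linear_fun lp) by (split; [apply lp_add| apply lp_scal]).
  assert (Hch : conv1 h).
  { unfold h. apply (line_conv Z (fun z => (f z - xi0 z) - lp z)). apply conv_sub_lin; auto. apply conv_sub_lin; auto. }
  destruct (classic (exists t1 t2, t1 < t2 /\ h t1 < h t2)) as [[t1 [t2 [H12 Hh]]]|Hno].
  { destruct (conv1_growth h t1 t2 Hch H12 Hh M) as [T HT]. exists T. intros t Ht. apply (HT t Ht). }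
  exfalso. apply Hv.
  assert (Hdec : forall t1 t2, t1 < t2 -> h t2 <= h t1).
  { intros t1 t2 H12. apply Rnot_lt_le. intro Hlt. apply Hno. exists t1, t2. auto. }
  pose proof ss_bounds as Hss.
  set (C0 := h 0 - (1 - ss) * m0 - Sm).
  assert (Hray : forall t, t >= 0 -> (1 - ss) * (f (vadd x (vscal t v)) - xi0 (vadd x (vscal t v)) - m0) + EE (vadd x (vscal t v)) <= C0).
  { intros t Ht. assert (h t <= h 0) by (destruct (Rle_lt_or_eq_dec 0 t) as [Hlt|Heq]; [lra| apply Hdec; auto| subst; lra]).
    unfold C0. unfold h in H |- *. rewrite !decomp in H. rewrite (decomp (vadd x (vscal 0 v))). lra. }
  assert (Hb0 : forall t, t >= 0 -> (fun z => f z - xi0 z) (vadd x (vscal t v)) <= m0 + C0 / (1 - ss)).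
  { intros t Ht. simpl. specialize (Hray t Ht). pose proof (EE_nonneg (vadd x (vscal t v))).
    set (e := f (vadd x (vscal t v)) - xi0 (vadd x (vscal t v)) - m0) in *.
    assert ((1 - ss) * e <= C0) by lra.
    assert (e <= C0 / (1 - ss)).
    { apply (Rmult_le_reg_l (1 - ss)). lra. field_simplify; lra. }
    unfold e in H2. lra. }
  assert (Hbk : forall k t, t >= 0 -> (fun z => f z - xi k z) (vadd x (vscal t v)) <= mm k + C0 / aa k).
  { intros k t Ht. simpl. specialize (Hray t Ht). pose proof (EE_ge_term (vadd x (vscal t v)) k).
    pose proof (subgrad_ineq Z f z0 xi0 (vadd x (vscal t v)) H0). unfold m0 in Hray.
    pose proof (aa_pos k).
    assert (aa k * (f (vadd x (vscal t v)) - xi k (vadd x (vscal t v)) - mm k) <= C0).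
    { assert (0 <= (1 - ss) * (f (vadd x (vscal t v)) - xi0 (vadd x (vscal t v)) - (f z0 - xi0 z0))).
      { apply Rmult_le_pos; lra. }
      lra. }
    assert (f (vadd x (vscal t v)) - xi k (vadd x (vscal t v)) - mm k <= C0 / aa k).
    { apply (Rmult_le_reg_l (aa k)); auto. field_simplify; lra. }
    lra. }
  assert (Hcv0 : convex_fun (fun z => f z - xi0 z)) by (apply conv_sub_lin; auto).
  assert (Hcvk : forall k, convex_fun (fun z => f z - xi k z)) by (intro k; apply conv_sub_lin; auto).
  assert (Hline : forall k t, t >= 0 -> f (vadd (d k) (vscal t v)) = f (d k) + t * xi0 v).
  { intros k t Ht.
    pose proof (transfer _ x v _ (Hcvk k) (Hbk k)) as Tk.
    pose proof (transfer _ x v _ Hcv0 Hb0) as T0. simpl in Tk, T0.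
    assert (Hk : forall t, t >= 0 -> f (vadd (d k) (vscal t v)) = f (d k) + t * xi k v).
    { intros t' Ht'. destruct (Rle_lt_or_eq_dec 0 t') as [Hlt|Heq]; [lra| |].
      - pose proof (Tk (d k) 0 t' Hlt) as A.
        pose proof (subgrad_ineq Z f (d k) (xi k) (vadd (d k) (vscal t' v)) (Hxi k)) as B.
        replace (vadd (d k) (vscal 0 v)) with (d k) in A by vec_eq.
        lin_simpl_in (HLn k) A. lin_simpl_in (HLn k) B. lra.
      - subst. replace (vadd (d k) (vscal 0 v)) with (d k) by vec_eq. ring. }
    assert (Hle : xi k v <= xi0 v).
    { pose proof (T0 (d k) 0 1 ltac:(lra)) as A. rewrite (Hk 1) in A by lra.
      replace (vadd (d k) (vscal 0 v)) with (d k) in A by vec_eq.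
      lin_simpl_in HL0 A. lra. }
    assert (Hge : xi0 v <= xi k v).
    { apply Rnot_lt_le. intro Hlt.
      set (T := (f (d k) - xi0 (d k) - m0) / (xi0 v - xi k v) + 1).
      assert (HT : T >= 0).
      { unfold T. pose proof (subgrad_ineq Z f z0 xi0 (d k) H0). unfold m0.
        assert (0 <= (f (d k) - xi0 (d k) - (f z0 - xi0 z0)) / (xi0 v - xi k v)) by (apply Rdiv_le_0_compat; lra). lra. }
      pose proof (subgrad_ineq Z f z0 xi0 (vadd (d k) (vscal T v)) H0) as B.
      rewrite (Hk T HT) in B. lin_simpl_in HL0 B.
      assert (T * (xi0 v - xi k v) > f (d k) - xi0 (d k) - m0).
      { unfold T. field_simplify; [|lra]. unfold m0. lra. }
      unfold m0 in H. nra. }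
    rewrite (Hk t Ht). f_equal. f_equal. lra. }
  assert (Hall : forall z t, t >= 0 -> f (vadd z (vscal t v)) = f z + t * xi0 v).
  { intros z t Ht. apply Rminus_diag_uniq. apply eps_zero. intros eps He.
    destruct (hcont z (eps / 2) ltac:(lra)) as [d1 [Hd1 H1]].
    destruct (hcont (vadd z (vscal t v)) (eps / 2) ltac:(lra)) as [d2 [Hd2 H2]].
    destruct (hd z (Rmin d1 d2) ltac:(apply Rmin_pos; auto)) as [k Hk].
    pose proof (Rmin_l d1 d2). pose proof (Rmin_r d1 d2).
    rewrite vnorm_sub_sym in Hk.
    specialize (H1 (d k) ltac:(lra)).
    specialize (H2 (vadd (d k) (vscal t v))).
    replace (vsub (vadd (d k) (vscal t v)) (vadd z (vscal t v))) with (vsub (d k) z) in H2 by vec_eq.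
    specialize (H2 ltac:(lra)). rewrite (Hline k t Ht) in H2.
    apply Rabs_def2 in H1. apply Rabs_def2 in H2. apply Rabs_le. lra. }
  intro t. lin_simpl HL0.
  destruct (Rle_or_lt 0 t) as [Ht|Ht].
  - rewrite (Hall z0 t ltac:(lra)). ring.
  - pose proof (Hall (vadd z0 (vscal t v)) (- t) ltac:(lra)) as A.
    replace (vadd (vadd z0 (vscal t v)) (vscal (- t) v)) with z0 in A by vec_eq. lra.
Qed.

Lemma ess_coercive : quot_ess_dir_coercive (Yset Z f z0 xi0) (fun z => f z - xi0 z).
Proof.
  exists lp. split.
  - split. split; [apply lp_add| apply lp_scal]. split.
    + apply lp_Y.
    + exists 1. split. lra. intros z y Hy.
      replace (lp z) with (lp (vadd z y)).
      * rewrite Rmult_1_l. apply lp_bound.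
      * rewrite lp_add, (lp_Y y Hy). ring.
  - apply coercive_main.
Qed.
End Coer.


Theorem mainTheorem3 (Z : Banach) (f : Z -> R)
  (hsep : separable Z) (hcont : continuous_fun f) (hconv : convex_fun f) :
  exists Yf : Z -> Prop,
    decomposes f Yf /\
    (forall Y' : Z -> Prop, decomposes f Y' -> forall v, Y' v <-> Yf v) /\
    (forall (z0 : Z) (xi0 : Z -> R), subdiff f z0 xi0 ->
       forall v, Yf v <->
         (forall t : R, f (vadd z0 (vscal t v)) - f z0 - xi0 (vscal t v) = 0)).
Proof.
  pose proof (subgrad_exists Z f hsep hcont hconv) as Hsub.
  destruct hsep as [d hd].
  destruct (Hsub vzero) as [xi0 H0].
  set (xi := fun n => proj1_sig (constructive_indefinite_description _ (Hsub (d n)))).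
  assert (Hxi : forall n, subdiff f (d n) (xi n)).
  { intro n. unfold xi. destruct (constructive_indefinite_description _ (Hsub (d n))); auto. }
  assert (HKe : forall n, exists K, 0 <= K /\ forall w, Rabs (xi n w - xi0 w) <= K * vnorm w).
  { intro n. destruct (dual_bound Z _ (proj1 (Hxi n))) as [C1 [HC1 B1]].
    destruct (dual_bound Z _ (proj1 H0)) as [C2 [HC2 B2]].
    exists (C1 + C2). split. lra. intro w.
    eapply Rle_trans. unfold Rminus. apply Rabs_triang. rewrite Rabs_Ropp.
    specialize (B1 w). specialize (B2 w). lra. }
  set (K := fun n => proj1_sig (constructive_indefinite_description _ (HKe n))).
  assert (HK : forall n, 0 <= K n /\ forall w, Rabs (xi n w - xi0 w) <= K n * vnorm w).
  { intro n. unfold K. destruct (constructive_indefinite_description _ (HKe n)); auto. }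
  pose proof (proj1 (proj1 H0)) as HL0.
  exists (Yset Z f vzero xi0).
  assert (Hdec : decomposes f (Yset Z f vzero xi0)).
  { split. apply Yset_closed; auto.
    exists xi0, (fun z => f z - xi0 z). split; [apply (proj1 H0)|]. split.
    - intros z y Hy. pose proof (affine_line Z f hcont hconv vzero xi0 H0 y Hy z 1) as A.
      replace (vadd z (vscal 1 y)) with (vadd z y) in A by vec_eq.
      rewrite A. lin_simpl HL0. ring.
    - split. apply conv_sub_lin; auto. split.
      + apply (ess_coercive Z f hcont hconv d hd vzero xi0 H0 xi Hxi K); intro n; apply HK.
      + intro z. ring. }
  split; auto. split.
  - intros Y' HY' v. apply (uniq_Y Z f hcont hconv vzero xi0 Y' H0 HY').
  - intros z1 xi1 H1 v. split.
    + intros Hv. apply (Yset_indep Z f hcont hconv vzero xi0 z1 xi1 H0 H1 v Hv).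
    + intros Hv. apply (Yset_indep Z f hcont hconv z1 xi1 vzero xi0 H1 H0 v Hv).
Qed.
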